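(* Consider a $K$-armed bandit with $K>1$ whose realized rewards satisfy $R_t(a)\in[-R_{\max},R_{\max}]$, and let $\eta>0$. Let $\pi_{\boldsymbol\theta_t}$ be a softmax policy, $a_t\sim\pi_{\boldsymbol\theta_t}$, $\hat r_t(a)=\mathbb I\{a_t=a\}R_t(a_t)/\pi_{\boldsymbol\theta_t}(a)$, and $$\widehat\nabla\Phi_\eta(\boldsymbol\theta_t)=(\mathrm{diag}(\pi_{\boldsymbol\theta_t})-\pi_{\boldsymbol\theta_t}\pi_{\boldsymbol\theta_t}^\top)\hat{\mathbf r}_t+\frac1\eta(\mathbf 1-K\pi_{\boldsymbol\theta_t}).$$ Then $$\|\widehat\nabla\Phi_\eta(\boldsymbol\theta_t)\|_2\le\sqrt2R_{\max}\big(1-\pi_{\boldsymbol\theta_t}(a_t)\big)+\frac{2K}{\eta}.$$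
   Context: Softmax policy $\pi_{\boldsymbol\theta}(a)=e^{\theta(a)}/\sum_be^{\theta(b)}$; $\widehat\nabla\Phi_\eta$ is the LB-SGB stochastic gradient of $\Phi_\eta(\boldsymbol\theta)=\pi_{\boldsymbol\theta}^\top\mathbf r+\frac1\eta\sum_a\log\pi_{\boldsymbol\theta}(a)$. *)

(* Defs.v *)
From mathcomp Require Import all_boot all_order all_algebra.
From mathcomp Require Import all_classical all_reals all_analysis.
Set Implicit Arguments. Unset Strict Implicit. Unset Printing Implicit Defensive.
Import Order.TTheory GRing.Theory Num.Theory.
Local Open Scope ring_scope.

Definition softmax (R : realType) (K : nat) (theta : 'I_K -> R) (a : 'I_K) : R :=
  expR (theta a) / \sum_(b < K) expR (theta b).

Definition rhat (R : realType) (K : nat) (theta : 'I_K -> R) (at_ : 'I_K)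
  (r : 'I_K -> R) (b : 'I_K) : R :=
  if at_ == b then r at_ / softmax theta b else 0.

Definition lbsgb_grad (R : realType) (K : nat) (eta : R) (theta : 'I_K -> R)
  (at_ : 'I_K) (r : 'I_K -> R) (b : 'I_K) : R :=
  \sum_(c < K) (((b == c)%:R * softmax theta b - softmax theta b * softmax theta c)
                  * rhat theta at_ r c)
  + eta^-1 * (1 - K%:R * softmax theta b).

Definition norm2 (R : realType) (K : nat) (v : 'I_K -> R) : R :=
  Num.sqrt (\sum_(b < K) v b ^+ 2).

(* Main.v *)
Require Import Defs.
From mathcomp Require Import all_boot all_order all_algebra.
From mathcomp Require Import all_classical all_reals all_analysis.
From mathcomp Require Import ring lra.
Import Order.TTheory GRing.Theory Num.Theory.
Local Open Scope ring_scope.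

Lemma sumsq_le (R : realType) (I : finType) (P : pred I) (f : I -> R) :
  (forall i, 0 <= f i) ->
  \sum_(i | P i) f i ^+ 2 <= (\sum_(i | P i) f i) ^+ 2.
Proof.
move=> f0; rewrite expr2 mulr_suml; apply: ler_sum => i Pi.
rewrite expr2; apply: ler_wpM2l => //.
by rewrite (bigD1 i) //= lerDl sumr_ge0.
Qed.

Theorem lemmaC1 (R : realType) (K : nat) (hK : (1 < K)%N) (Rmax eta : R)
  (heta : 0 < eta) (theta : 'I_K -> R) (at_ : 'I_K) (r : 'I_K -> R)
  (hr : forall a : 'I_K, - Rmax <= r a <= Rmax) :
  norm2 (lbsgb_grad eta theta at_ r)
    <= Num.sqrt 2 * Rmax * (1 - softmax theta at_) + 2 * K%:R / eta.
Proof.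
set p := softmax theta.
have p_gt0 b : 0 < p b.
  rewrite /p /softmax divr_gt0 ?expR_gt0 //.
  by rewrite (bigD1 b) //= ltr_pwDl ?expR_gt0 // sumr_ge0 // => i _; rewrite ltW ?expR_gt0.
have sum1 : \sum_b p b = 1.
  rewrite /p /softmax -mulr_suml mulfV // gt_eqF //.
  by rewrite (bigD1 at_) //= ltr_pwDl ?expR_gt0 // sumr_ge0 // => i _; rewrite ltW ?expR_gt0.
set x := r at_. set c := eta^-1. set pa := p at_.
set d := fun b : 'I_K => (at_ == b)%:R : R.
have gE b : lbsgb_grad eta theta at_ r b = x * (d b - p b) + c * (1 - K%:R * p b).
  rewrite /lbsgb_grad (bigD1 at_) //= big1 ?addr0; last first.
    by move=> i /negbTE; rewrite /rhat eq_sym => ->; rewrite mulr0.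
  rewrite /rhat eqxx /d -/p -/x -/c eq_sym.
  have pa0 : p at_ != 0 by rewrite gt_eqF.
  case: (eqVneq at_ b) => [<-|ne]; rewrite /= ?mul1r ?mul0r.
    by field.
  by field.
have pa_ge0 : 0 <= pa by exact: ltW (p_gt0 _).
have rest1 : \sum_(b | b != at_) p b = 1 - pa.
  by have := sum1; rewrite (bigD1 at_) //= -/pa => h; lra.
have rest_ge0 : 0 <= \sum_(b | b != at_) p b by rewrite sumr_ge0 // => i _; exact: ltW (p_gt0 _).
have pa_le1 : pa <= 1 by lra.
set q := \sum_b p b ^+ 2.
have qE : q = pa ^+ 2 + \sum_(b | b != at_) p b ^+ 2 by rewrite /q (bigD1 at_).
have qlo : pa ^+ 2 <= q by rewrite qE lerDl sumr_ge0 // => i _; exact: sqr_ge0.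
have qhi : q <= pa ^+ 2 + (1 - pa) ^+ 2.
  by rewrite qE lerD2l -rest1 sumsq_le // => i; exact: ltW (p_gt0 _).
have sumd : \sum_b d b = 1.
  rewrite (bigD1 at_) //= big1 ?addr0 /d ?eqxx //.
  by move=> i; rewrite eq_sym => /negbTE ->.
have termE b : (x * (d b - p b) + c * (1 - K%:R * p b)) ^+ 2 =
    d b * (x ^+ 2 * (1 - 2 * pa) + 2 * x * c * (1 - K%:R * pa))
    + p b * (- 2 * x * c - 2 * K%:R * c ^+ 2)
    + p b ^+ 2 * (x ^+ 2 + 2 * x * c * K%:R + c ^+ 2 * K%:R ^+ 2) + c ^+ 2.
  rewrite /d; case: (eqVneq at_ b) => [<-|ne]; rewrite /pa /=; ring.
have SE : \sum_b lbsgb_grad eta theta at_ r b ^+ 2 =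
    x ^+ 2 * (1 - 2 * pa + q) + 2 * x * c * K%:R * (q - pa)
    + c ^+ 2 * (K%:R ^+ 2 * q - K%:R).
  under eq_bigr do rewrite gE termE.
  have L1 B : \sum_b p b * B = B by rewrite -mulr_suml sum1 mul1r.
  have L2 B : \sum_b d b * B = B by rewrite -mulr_suml sumd mul1r.
  have L3 B : \sum_b p b ^+ 2 * B = q * B by rewrite -mulr_suml.
  have L4 : \sum_(b < K) c ^+ 2 = K%:R * c ^+ 2 by rewrite sumr_const card_ord mulr_natl.
  rewrite !big_split /= L1 L2 L3 L4.
  rewrite -mulr_natr; ring.
rewrite /norm2 SE.
set T := _ + _ * c.
have s2 : Num.sqrt (2 : R) ^+ 2 = 2 by rewrite sqr_sqrtr.
have s0 : 0 <= Num.sqrt (2 : R) by apply: sqrtr_ge0.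
have s1 : 1 <= Num.sqrt (2 : R) by nra.
have Rm0 : 0 <= Rmax by have := hr at_; lra.
have c0 : 0 < c by rewrite invr_gt0.
have K2 : 2 <= K%:R :> R by rewrite (ler_nat R 2 K).
have xb : - Rmax <= x <= Rmax by apply: hr.
have T0 : 0 <= T.
  rewrite /T addr_ge0 // ?mulr_ge0 //; lra.
rewrite -(ger0_norm T0) -sqrtr_sqr ler_sqrt; last by rewrite sqr_ge0.
have x2 : x ^+ 2 <= Rmax ^+ 2 by nra.
have h1 : x ^+ 2 * (1 - 2 * pa + q) <= 2 * Rmax ^+ 2 * (1 - pa) ^+ 2.
  have w0 : 0 <= 1 - 2 * pa + q by nra.
  have w1 : 1 - 2 * pa + q <= 2 * (1 - pa) ^+ 2 by nra.
  nra.
have qd : `|q - pa| <= 1 - pa.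
  rewrite ler_norml; apply/andP; split; nra.
have xq : x * (q - pa) <= Rmax * (1 - pa).
  apply: le_trans (ler_norm _) _; rewrite normrM.
  apply: ler_pM => //; first by rewrite ler_norml.
have h2 : 2 * x * c * K%:R * (q - pa) <= 4 * Num.sqrt 2 * Rmax * (1 - pa) * K%:R * c.
  have cK : 0 <= 2 * c * K%:R by nra.
  have := ler_wpM2l cK xq.
  have M0 : 0 <= c * K%:R * (Rmax * (1 - pa)) by rewrite !mulr_ge0 //; lra.
  have := mulr_ge0 M0 (_ : 0 <= 2 * Num.sqrt 2 - 1) => /(_ ltac:(lra)).
  move=> h h'; nra.
have h3 : c ^+ 2 * (K%:R ^+ 2 * q - K%:R) <= 4 * K%:R ^+ 2 * c ^+ 2.
  have : q <= 1 by nra.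
  nra.
have TE : T ^+ 2 = Num.sqrt 2 ^+ 2 * (Rmax * (1 - pa)) ^+ 2
   + 4 * Num.sqrt 2 * Rmax * (1 - pa) * K%:R * c + 4 * K%:R ^+ 2 * c ^+ 2.
  by rewrite /T; ring.
rewrite TE s2; lra.
Qed.
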